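(* Let $k>t+1$, $n>2k-t$, and let $\mathcal{S}_p$ be a maximal set of $k$-spaces in $\mathrm{PG}(n,q)$ pairwise intersecting in at least a $t$-space. Let $\psi(\mathcal{S}_p)=\min\{\dim T: T\text{ a subspace},\ \dim(T\cap\alpha)\geq t\ \forall\alpha\in\mathcal{S}_p\}$. If $\psi(\mathcal{S}_p)=t+x$ with $x\geq 2$, then \[|\mathcal{S}_p|\leq(\theta_{k-t})^x\left[{n-t-x\atop k-t-x}\right]_q\left[{t+x+1\atop t+1}\right]_q.\]
   Context: Dimensions are projective; $\left[{n\atop k}\right]_q=\frac{(q^n-1)\cdots(q^{n-k+1}-1)}{(q^k-1)\cdots(q-1)}$ for $k>0$, $=1$ for $k=0$; $\theta_m=\frac{q^{m+1}-1}{q-1}$. Maximal means no further $k$-space can be added keeping the property. *)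

(* Defs.v *)
From HB Require Import structures.
From mathcomp Require Import all_boot all_order all_algebra all_field.
Set Implicit Arguments. Unset Strict Implicit. Unset Printing Implicit Defensive.
Import GRing.Theory.
Local Open Scope ring_scope.
Import VectorInternalTheory.

(* Subspaces of F^m (m = n+1 gives PG(n, #|F|)) form a finite type when F is finite. *)
HB.instance Definition _ (F : finFieldType) (m : nat) :=
  [Finite of {vspace 'rV[F]_m} by <:].

(* Projective dimension of a vector subspace: pdim U = \dim U - 1 (as an int,
   so the empty space has projective dimension -1). *)
Definition pdim (F : finFieldType) (m : nat) (U : {vspace 'rV[F]_m}) : int :=
  (\dim U)%:Z - 1.

Definition qbinom (q n k : nat) : nat :=
  ((\prod_(i < k) (q ^ (n - i) - 1)) %/ (\prod_(i < k) (q ^ (i.+1) - 1)))%N.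

Definition theta (q m : nat) : nat := ((q ^ m.+1 - 1) %/ (q - 1))%N.

Definition t_intersecting (F : finFieldType) (m : nat) (k t : int)
  (S : {set {vspace 'rV[F]_m}}) : Prop :=
  (forall a, a \in S -> pdim a = k) /\
  (forall a b, a \in S -> b \in S -> t <= pdim (a :&: b)%VS).

Definition maximal_t_intersecting (F : finFieldType) (m : nat) (k t : int)
  (S : {set {vspace 'rV[F]_m}}) : Prop :=
  t_intersecting k t S /\
  (forall b, b \notin S -> ~ t_intersecting k t (b |: S)).

Definition t_blocking (F : finFieldType) (m : nat) (t : int)
  (S : {set {vspace 'rV[F]_m}}) (T : {vspace 'rV[F]_m}) : Prop :=
  forall a, a \in S -> t <= pdim (T :&: a)%VS.

Definition psi_eq (F : finFieldType) (m : nat) (t : int)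
  (S : {set {vspace 'rV[F]_m}}) (d : int) : Prop :=
  (exists T, t_blocking t S T /\ pdim T = d) /\
  (forall T, t_blocking t S T -> d <= pdim T).

(* Main.v *)
Require Import Defs.
From HB Require Import structures.
From mathcomp Require Import all_boot all_order all_algebra all_field.
From mathcomp Require Import zify.
Import GRing.Theory Num.Theory.
Set Implicit Arguments. Unset Strict Implicit. Unset Printing Implicit Defensive.

Lemma sub_pow q c i : 0 < q -> q ^ c - q ^ i = q ^ i * (q ^ (c - i) - 1).
Proof.
move=> q0; rewrite mulnBr muln1 -expnD.
case: (leqP i c) => ic; first by rewrite subnKC.
have -> : c - i = 0 by apply/eqP; rewrite subn_eq0 ltnW.
by rewrite addn0 subnn; apply/eqP; rewrite subn_eq0 leq_pexp2l // ltnW.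
Qed.

Definition Num q c d := \prod_(i < d) (q ^ (c - i) - 1).
Definition Den q d := \prod_(i < d) (q ^ i.+1 - 1).

Lemma Den_gt0 q d : 1 < q -> 0 < Den q d.
Proof.
move=> q1; rewrite /Den prodn_gt0 // => i; rewrite subn_gt0.
by rewrite -{1}(expn0 q) ltn_exp2l.
Qed.

Lemma prod_sub_pow q c d : 0 < q ->
  \prod_(i < d) (q ^ c - q ^ i) = (\prod_(i < d) q ^ i) * Num q c d.
Proof.
move=> q0; rewrite /Num -big_split /=; apply: eq_bigr => i _; exact: sub_pow.
Qed.

Lemma Num_diag q d : Num q d d = Den q d.
Proof.
rewrite /Num /Den (reindex_inj rev_ord_inj) /=; apply: eq_bigr => i _.
by rewrite subKn.
Qed.

Section Count.
Variables (F : finFieldType) (m : nat).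
Local Notation vT := 'rV[F]_m.
Local Notation q := #|F|.

Definition FT (C : {vspace vT}) d := [set s : d.-tuple vT | free s && (<<s>> <= C)%VS].

Lemma card_vs (U : {vspace vT}) : #|[set v : vT | v \in U]| = q ^ \dim U.
Proof. by rewrite cardsE card_vspace. Qed.

Lemma FT_S C d : #|FT C d.+1| = #|FT C d| * (q ^ \dim C - q ^ d).
Proof.
rewrite -[#|FT C d.+1|]sum1_card -[#|FT C d|]sum1_card.
rewrite (partition_big (fun t : d.+1.-tuple vT => [tuple of behead t]) (mem (FT C d))).
  rewrite big_distrl /=; apply: eq_bigr => s sF; rewrite mul1n.
  rewrite sum1_card.
  rewrite (@eq_card _ _ [set [tuple of v :: s] | v in [set v : vT | (v \in C) && (v \notin <<s>>)%VS]]); last first.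
    move=> t; rewrite [LHS]unfold_in /=; apply/andP/imsetP.
      case=> tF /eqP bs; exists (thead t).
        move: tF; rewrite inE (tuple_eta t) /= free_cons span_cons subv_add -memvE.
        case/andP=> /andP[nin _] /andP[inC _]; rewrite inE inC /=.
        by move: nin; rewrite -bs.
      by rewrite (tuple_eta t) -bs; apply: val_inj.
    case=> v; rewrite inE => /andP[vC vn] ->; split; last first.
      by apply/eqP/val_inj.
    move: sF; rewrite !inE /= free_cons span_cons subv_add -memvE vC vn.
    by case/andP=> -> ->.
  rewrite card_imset; last by move=> v1 v2 /(congr1 (fun t => thead t)); rewrite !theadE.
  have Hs : (<<s>> <= C)%VS /\ \dim <<s>> = d.
    by move: sF; rewrite inE => /andP[/eqP fr ->]; rewrite fr size_tuple.
  case: Hs => sC ds.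
  transitivity (#|[set v : vT | v \in C]| - #|[set v : vT | v \in <<s>>%VS]|); last by rewrite !card_vs ds.
  have sub : [set v : vT | v \in <<s>>%VS] \subset [set v : vT | v \in C].
    by apply/subsetP=> v; rewrite !inE; move/subvP: sC; apply.
  rewrite -(setIidPr sub).
  rewrite -cardsD; apply: eq_card => v; rewrite !inE.
  by rewrite andbC.
move=> t; rewrite !inE (tuple_eta t) /= free_cons span_cons subv_add.
by case/andP=> /andP[_ ->] /andP[_ ->].
Qed.


Lemma FT_card C d : #|FT C d| = \prod_(i < d) (q ^ \dim C - q ^ i).
Proof.
elim: d => [|d IH]; last by rewrite FT_S IH big_ord_recr.
rewrite big_ord0 (_ : FT C 0 = setT) ?cardsT ?card_tuple ?expn0 //.
apply/setP=> s; rewrite !inE tuple0 /=.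
by rewrite /free span_nil dimv0 sub0v.
Qed.

Definition subs (C : {vspace vT}) d :=
  [set U : {vspace vT} | (U <= C)%VS && (\dim U == d)].

Lemma FT_subs C d : #|FT C d| = #|subs C d| * \prod_(i < d) (q ^ d - q ^ i).
Proof.
rewrite -[#|FT C d|]sum1_card.
rewrite (partition_big (fun t : d.-tuple vT => <<t>>%VS) (mem (subs C d))).
  rewrite -sum1_card big_distrl /=; apply: eq_bigr => U UC; rewrite mul1n sum1_card.
  move: UC; rewrite inE => /andP[UC /eqP dU].
  transitivity #|FT U d|; last by rewrite FT_card dU.
  apply: eq_card => s; rewrite unfold_in /= !inE.
  apply/andP/andP.
    case=> /andP[fs sC] /eqP <-; split=> //.
  case=> fs sU; split; last first.
    by rewrite eqEdim sU dU /= (eqP fs) size_tuple.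
  by apply/andP; split=> //; exact: subv_trans sU UC.
move=> s; rewrite !inE => /andP[fs ->] /=.
by rewrite (eqP fs) size_tuple.
Qed.


Lemma subs_mul C d : #|subs C d| * Den q d = Num q (\dim C) d.
Proof.
have q1 := finNzRing_gt1 F; have q0 : 0 < q by apply: ltnW.
have := FT_subs C d; rewrite FT_card !prod_sub_pow // Num_diag.
rewrite mulnCA => /eqP; rewrite eqn_pmul2l ?prodn_gt0 // => [/eqP -> //|i].
by rewrite expn_gt0 q0.
Qed.

Lemma subs_qbinom C d : #|subs C d| = qbinom q (\dim C) d.
Proof.
have q1 := finNzRing_gt1 F.
by rewrite /qbinom -/(Num q _ d) -/(Den q d) -subs_mul mulnK // Den_gt0.
Qed.

Definition betw (A B : {vspace vT}) d :=
  [set U : {vspace vT} | [&& (A <= U)%VS, (U <= B)%VS & (\dim U == d)]].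

Lemma betw_le A B d : #|betw A B d| <= qbinom q (\dim B - \dim A) (d - \dim A).
Proof.
case AB: (A <= B)%VS; last first.
  rewrite (_ : betw A B d = set0) ?cards0 //; apply/setP=> U; rewrite !inE.
  by apply/negP=> /and3P[AU UB _]; move: AB; rewrite (subv_trans AU UB).
set C := (B :\: A)%VS.
have BA : (B :&: A = A)%VS by apply/capv_idPr.
have CA : (C + A = B)%VS by rewrite /C -{2}BA addv_diff_cap.
have dC : \dim C = \dim B - \dim A.
  by rewrite -(dimv_cap_compl B A) BA addKn.
rewrite -dC -subs_qbinom.
have key : forall U, U \in betw A B d -> (A + (C :&: U) = U)%VS /\ \dim (C :&: U) = d - \dim A.
  move=> U; rewrite inE => /and3P[AU UB /eqP dU]; split.
    by rewrite vspace_modl // addvC CA; apply/capv_idPr.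
  have CU : (C + U = B)%VS.
    apply/eqP; rewrite eqEsubv subv_add UB diffvSl /=.
    by rewrite -{1}CA addvS.
  have := dimv_sum_cap C U; rewrite CU dC dU.
  have := dimvS AU; have := dimvS UB; rewrite dU; lia.
rewrite -(card_in_imset (f := fun U => (C :&: U)%VS)); last first.
  move=> U1 U2 /key [e1 _] /key [e2 _] /= e.
  by rewrite -e1 -e2 e.
apply: subset_leq_card; apply/subsetP=> V /imsetP [U UB ->].
rewrite inE capvSl /=; apply/eqP; exact: (key U UB).2.
Qed.

Lemma exists_betw A B d : (A <= B)%VS -> \dim A <= d -> d <= \dim B ->
  exists U, U \in betw A B d.
Proof.
move=> AB; move Er: (d - \dim A) => r; elim: r A AB Er => [|r IH] A AB Er Ad dB.
  by exists A; rewrite inE subvv AB eqn_leq Ad -subn_eq0 Er /=.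
case: (pickP (fun v : vT => (v \in B) && (v \notin A))) => [v /andP[vB vA]|none]; last first.
  have BA : (B <= A)%VS by apply/subvP=> v vB; move: (none v); rewrite vB /=; move/negbFE.
  have := dimvS BA; lia.
pose w : {vspace vT} := <[v]>%VS.
set A' := (A + w)%VS.
have AA' : (A <= A')%VS by apply: addvSl.
have dA' : \dim A' = (\dim A).+1.
  have h1 := dimv_sum_cap A w; have h2 : \dim w <= 1 by rewrite /w dim_vline leq_b1.
  have h3 : \dim A < \dim A'.
    rewrite ltnNge; apply/negP => h; have : A == A' by rewrite eqEdim AA' h.
    move/eqP => e; move: vA; rewrite e /A' memvE addvSr.
    done.
  rewrite -/A' in h1; lia.
have A'B : (A' <= B)%VS by rewrite /A' subv_add AB /w -memvE vB.
have [|||U HU] := IH A' A'B; rewrite ?dA'; try lia.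
exists U; move: HU; rewrite !inE => /and3P[h1 -> ->]; by rewrite (subv_trans AA' h1).
Qed.

End Count.

Lemma geom q n : 0 < q -> (q - 1) * \sum_(i < n) q ^ i = q ^ n - 1.
Proof.
move=> q0; elim: n => [|n IH]; first by rewrite big_ord0 muln0 expn0.
rewrite big_ord_recr /= mulnDr IH expnS.
have : 0 < q ^ n by rewrite expn_gt0 q0.
move: (q ^ n) => X X0; nia.
Qed.

Lemma theta_mul q c : 1 < q -> theta q c * (q - 1) = q ^ c.+1 - 1.
Proof.
move=> q1; rewrite /theta -(geom c.+1 (ltnW q1)) mulKn; last by rewrite subn_gt0.
by rewrite mulnC geom // ltnW.
Qed.

Lemma aux Q A B : 1 < Q -> 0 < A -> 0 < B -> (A * (Q * B) - 1) * (Q - 1) <= (Q * A - 1) * (Q * B - 1).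
Proof.
case: Q => [|[|p]] // _; case: A => [|a] // _; case: B => [|b] // _.
rewrite !subn1 /=.
nia.
Qed.

Section Arith.
Variable F : finFieldType.
Local Notation q := #|F|.

Lemma q_gt1 : 1 < q. Proof. exact: finNzRing_gt1. Qed.

Lemma qbinom_mul a b : qbinom q a b * Den q b = Num q a b.
Proof.
have := subs_mul (fullv : {vspace 'rV[F]_a}) b.
by rewrite subs_qbinom dimvf dim_matrix mul1r.
Qed.

Lemma term_le c i : q ^ (c + i.+1) - 1 <= theta q c * (q ^ i.+1 - 1).
Proof.
have q1 := q_gt1.
have tm := theta_mul c q1.
rewrite -(leq_pmul2r (_ : 0 < q - 1)); last by rewrite subn_gt0.
rewrite mulnAC tm !expnS expnD expnS.
have A1 : 0 < q ^ c by rewrite expn_gt0 ltnW.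
have B1 : 0 < q ^ i by rewrite expn_gt0 ltnW.

exact: aux.
Qed.

Lemma qbinom_theta c j : qbinom q (c + j) j <= theta q c ^ j.
Proof.
have q1 := q_gt1.
rewrite -(leq_pmul2r (Den_gt0 j q1)) qbinom_mul /Num /Den.
have -> : theta q c ^ j = \prod_(i < j) theta q c by rewrite prod_nat_const card_ord.
rewrite -big_split /=.
rewrite (reindex_inj rev_ord_inj) /=; apply: leq_prod => i _.
have -> : c + j - (j - i.+1) = c + i.+1 by have := ltn_ord i; lia.
exact: term_le.
Qed.

Lemma theta_le s : theta q s <= q ^ s.+1.
Proof.
have q1 := q_gt1.
rewrite -(leq_pmul2r (_ : 0 < q - 1)); last by rewrite subn_gt0.
rewrite theta_mul //.
have : 0 < q ^ s.+1 by rewrite expn_gt0 ltnW.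
have : 0 < q - 1 by rewrite subn_gt0.
move: (q ^ s.+1) (q - 1) => X Y; nia.
Qed.

Lemma key_ineq s M L : s.+1 + L <= M -> theta q s * (q ^ L - 1) <= q ^ M - 1.
Proof.
move=> h; have q1 := q_gt1.
have h1 := theta_le s.
have h2 : q ^ s.+1 * q ^ L <= q ^ M by rewrite -expnD leq_pexp2l // ltnW.
have h3 : 0 < q ^ s.+1 by rewrite expn_gt0 ltnW.
have h4 : 0 < q ^ L by rewrite expn_gt0 ltnW.
move: h1 h2 h3 h4; move: (theta q s) (q ^ s.+1) (q ^ L) (q ^ M) => T X Y Z.
nia.
Qed.

Lemma qbinom_step s M L : 0 < L -> s.+1 + L <= M ->
  theta q s * qbinom q M.-1 L.-1 <= qbinom q M L.
Proof.
case: L => [|L] // _ h; case: M h => [|M] h; first by move: h; rewrite addnS.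
have q1 := q_gt1.
have e1 := qbinom_mul M.+1 L.+1.
have e2 := qbinom_mul M L.
have eD : Den q L.+1 = Den q L * (q ^ L.+1 - 1) by rewrite /Den big_ord_recr.
have eN : Num q M.+1 L.+1 = (q ^ M.+1 - 1) * Num q M L.
  by rewrite /Num big_ord_recl subn0; congr (_ * _); apply: eq_bigr => i _; rewrite subSS.
have D0 := Den_gt0 L q1.
have P0 : 0 < q ^ L.+1 - 1 by rewrite subn_gt0 -{1}(expn0 q) ltn_exp2l.
rewrite /= -(leq_pmul2r D0) -(leq_pmul2r P0).
rewrite -(mulnA (qbinom q M.+1 L.+1)) -eD e1 eN -e2.
have k := key_ineq h.
have k2 := leq_mul k (leqnn (qbinom q M L * Den q L)).
apply: leq_trans k2; rewrite eq_leq //.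
move: (theta q s) (qbinom q M L) (Den q L) (q ^ L.+1 - 1) => T b D P; lia.
Qed.

Lemma qbinom_iter s M L r : r <= L -> s.+1 + L <= M ->
  theta q s ^ r * qbinom q (M - r) (L - r) <= qbinom q M L.
Proof.
move=> rL h; elim: r rL => [|r IH] rL; first by rewrite expn0 mul1n !subn0.
apply: leq_trans (IH (ltnW rL)).
rewrite expnS -mulnA mulnCA leq_mul2l; apply/orP; right.
have := @qbinom_step s (M - r) (L - r).
rewrite !subnS; apply; lia.
Qed.

End Arith.

Lemma cover_le (X Y : finType) (A : {set X}) (B : {set Y}) (R : X -> Y -> bool) :
  (forall a, a \in A -> exists2 y, y \in B & R a y) ->
  #|A| <= \sum_(y in B) #|[set a in A | R a y]|.
Proof.
move=> h.
have -> : \sum_(y in B) #|[set a in A | R a y]| = \sum_(y in B) \sum_(a in A) (R a y : nat).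
  apply: eq_bigr => y _; rewrite -sum1_card big_mkcond [RHS]big_mkcond /=.
  apply: eq_bigr => a _; rewrite inE.
  by case: (a \in A); case: (R a y).
rewrite exchange_big /= -sum1_card; apply: leq_sum => a aA.
have [y yB Ray] := h a aA.
by rewrite (bigD1 y) //= Ray leq_addr.
Qed.

Section Main.
Variables (F : finFieldType) (N : nat).
Local Notation vT := 'rV[F]_N.
Local Notation q := #|F|.
Variables (S : {set {vspace vT}}) (K tt x : nat).
Hypothesis HK : forall a, a \in S -> \dim a = K.
Hypothesis Hint : forall a b, a \in S -> b \in S -> tt <= \dim (a :&: b).
Hypothesis Hnb : forall s : {vspace vT}, \dim s < tt + x -> exists2 b, b \in S & \dim (s :&: b) < tt.
Hypothesis HttK : tt <= K.
Hypothesis HNK : (K - tt).+1 + K <= N.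

Definition cnt (s : {vspace vT}) := #|[set a in S | (s <= a)%VS]|.
Definition G i := if i <= x then theta q (K - tt) ^ (x - i) * qbinom q (N - tt - x) (K - tt - x)
  else if tt + i <= K then qbinom q (N - tt - i) (K - tt - i) else 0.

Lemma cnt_base s : cnt s <= if \dim s <= K then qbinom q (N - \dim s) (K - \dim s) else 0.
Proof.
case: ifP => h.
  have := betw_le s fullv K; rewrite dimvf dim_matrix mul1r => hb; apply: leq_trans hb.
  apply: subset_leq_card; apply/subsetP => a; rewrite !inE => /andP[aS sa].
  by rewrite sa subvf HK // eqxx.
rewrite leqn0 cards_eq0; apply/eqP/setP => a; rewrite !inE.
apply/negP => /andP[aS sa]; move: h; rewrite -(HK aS) (dimvS sa).
done.
Qed.

Lemma G_base i s : x <= i -> \dim s = tt + i -> cnt s <= G i.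
Proof.
move=> xi ds; apply: leq_trans (cnt_base s) _; rewrite ds /G.
case: (leqP i x) => ix.
  have -> : i = x by apply/eqP; rewrite eqn_leq ix xi.
  rewrite subnn expn0 mul1n; case: ifP => // _; rewrite !subnDA //.
case: ifP => // _; rewrite !subnDA //.
Qed.

Lemma step_arith i j : i < x -> 0 < j -> qbinom q (K - tt + j) j * G (i + j) <= G i.
Proof.
move=> ix j0; rewrite /G (ltnW ix).
have hb := qbinom_theta F (K - tt) j.
case: (leqP (i + j) x) => ijx.
  apply: leq_trans (leq_mul hb (leqnn _)) _.
  rewrite mulnA -expnD eq_leq //; congr (_ ^ _ * _); lia.
case: ifP => hK; last by rewrite muln0.
apply: leq_trans (leq_mul hb (leqnn _)) _.
have -> : j = (x - i) + (i + j - x) by lia.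
rewrite expnD -mulnA leq_mul2l; apply/orP; right.
have := @qbinom_iter F (K - tt) (N - tt - x) (K - tt - x) (i + j - x).
have -> : N - tt - x - (i + j - x) = N - tt - (i + (x - i + (i + j - x))) by lia.
have -> : K - tt - x - (i + j - x) = K - tt - (i + (x - i + (i + j - x))) by lia.
apply; lia.
Qed.

Lemma main_rec r : forall i s, x - i <= r -> \dim s = tt + i -> cnt s <= G i.
Proof.
elim: r => [|r IH] i s hr ds.
  by apply: G_base => //; move: hr; rewrite leqn0 subn_eq0.
case: (leqP x i) => xi; first exact: G_base.
have [b bS hb] : exists2 b, b \in S & \dim (s :&: b) < tt by apply: Hnb; rewrite ds ltn_add2l.
set e := \dim (s :&: b) in hb.
set j := tt - e.
pose fam := betw (s :&: b) b tt.
have Hcov : cnt s <= \sum_(U in fam) cnt (s + U).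
  apply: leq_trans (cover_le (B := fam) (R := fun a U => (s + U <= a)%VS) _) _.
    move=> a; rewrite inE => /andP[aS sa].
    have hab := Hint aS bS.
    have sbab : (s :&: b <= a :&: b)%VS by apply: capvS.
    have [U] := exists_betw sbab (ltnW hb) hab.
    rewrite inE => /and3P[h1 h2 h3]; exists U.
      by rewrite inE h1 (subv_trans h2 (capvSr _ _)).
    by rewrite subv_add sa (subv_trans h2 (capvSl _ _)).
  apply: leq_sum => U _; apply: subset_leq_card; apply/subsetP => a.
  by rewrite !inE => /andP[/andP[-> _] ->].
have HU : forall U, U \in fam -> cnt (s + U) <= G (i + j).
  move=> U; rewrite inE => /and3P[h1 h2 /eqP h3].
  apply: IH; first lia.
  have e1 : (s :&: U = s :&: b)%VS.
    apply/eqP; rewrite eqEsubv (capvS (subvv s) h2) /= subv_cap capvSl h1 //.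
  have := dimv_sum_cap s U; rewrite e1 -/e ds h3.
  have : e < tt by [].
  rewrite /j; lia.
apply: (leq_trans Hcov).
apply: (@leq_trans (\sum_(U in fam) G (i + j))); first by apply: leq_sum.
rewrite sum_nat_const.
have j0 : 0 < j by rewrite /j subn_gt0.
apply: leq_trans (@step_arith i j xi j0).
rewrite leq_mul2r; apply/orP; right.
have := betw_le (s :&: b) b tt; rewrite HK // -/e.
have -> : K - e = K - tt + j by rewrite /j; lia.
done.
Qed.

Lemma final (T : {vspace vT}) : (forall a, a \in S -> tt <= \dim (T :&: a)) ->
  \dim T = tt + x -> #|S| <= qbinom q (tt + x) tt * G 0.
Proof.
move=> HT dT.
apply: leq_trans (cover_le (B := subs T tt) (R := fun a U => (U <= a)%VS) _) _.
  move=> a aS.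
  have d0 : \dim (0 : {vspace vT}) <= tt by rewrite dimv0.
  have [U] := exists_betw (sub0v (T :&: a)) d0 (HT a aS).
  rewrite inE => /and3P[_ h2 h3]; exists U.
    by rewrite inE h3 (subv_trans h2 (capvSl _ _)).
  exact: (subv_trans h2 (capvSr _ _)).
have HU : forall U, U \in subs T tt -> #|[set a in S | (U <= a)%VS]| <= G 0.
  move=> U; rewrite inE => /andP[_ /eqP dU].
  apply: (@main_rec x); rewrite ?subn0 ?addn0 //.
apply: (@leq_trans (\sum_(U in subs T tt) G 0)); first by apply: leq_sum.
by rewrite sum_nat_const subs_qbinom dT.
Qed.

End Main.


Theorem mainTheorem9 (F : finFieldType) (n k t x : nat)
  (S : {set {vspace 'rV[F]_n.+1}}) :
  (t.+1 < k)%N -> (2 * k - t < n)%N ->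
  maximal_t_intersecting (k%:Z) (t%:Z) S ->
  (2 <= x)%N ->
  psi_eq (t%:Z) S ((t + x)%N%:Z) ->
  (#|S| <= theta #|F| (k - t) ^ x * qbinom #|F| (n - t - x) (k - t - x)
            * qbinom #|F| (t + x + 1) (t + 1))%N.
Proof.
move=> htk hn [[Hdim Hint] _] hx [[T [Tb Td]] Hmin].
have HK : forall a, a \in S -> \dim a = k.+1.
  by move=> a /Hdim; rewrite /pdim; lia.
have Hint' : forall a b, a \in S -> b \in S -> t.+1 <= \dim (a :&: b).
  by move=> a b aS bS; have := Hint a b aS bS; rewrite /pdim; lia.
have Hnb : forall s : {vspace 'rV[F]_n.+1}, \dim s < t.+1 + x ->
    exists2 b, b \in S & \dim (s :&: b) < t.+1.
  move=> s hs.
  case: (pickP (fun b => (b \in S) && (\dim (s :&: b) < t.+1))) => [b /andP[]|none].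
    by exists b.
  exfalso.
  have : t_blocking (t%:Z) S s.
    move=> a aS; have := none a; rewrite aS /= => /negbT; rewrite -leqNgt /pdim; lia.
  by move/Hmin; rewrite /pdim; lia.
have HT : forall a, a \in S -> t.+1 <= \dim (T :&: a).
  by move=> a aS; have := Tb a aS; rewrite /pdim; lia.
have dT : \dim T = t.+1 + x by move: Td; rewrite /pdim; lia.
have HttK : t.+1 <= k.+1 by lia.
have HNK : (k.+1 - t.+1).+1 + k.+1 <= n.+1 by lia.
have := final HK Hint' Hnb HttK HNK HT dT.
rewrite /G leq0n subn0 !subSS.
have -> : t.+1 + x = t + x + 1 by lia.
move=> h; apply: (leq_trans h); rewrite [X in _ <= X]mulnC !addn1; exact: leqnn.
Qed.
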